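(* Let $p,q\in\mathbb{R}[t_1,\dots,t_\ell]$ satisfy $p\succeq0$, $q\succeq0$ and $p\simeq q$. Then $p$ and $q$ have the same leading homogeneous component.
   Context: For $p\in\mathbb{R}[\bar t]$, $\bar t=(t_1,\dots,t_\ell)$, write $p=p_0+p_1+\dots+p_d$ with $p_i$ homogeneous of degree $i$ and $p_d\ne0$; $p_d$ is the leading homogeneous component of $p$. Write $p\preceq q$ if there is $\bar c\in\mathbb{N}^\ell$ such that $p(\bar n)\le q(\bar n+\bar c)$ for all $\bar n\in\mathbb{N}^\ell$ large enough; $p\simeq q$ if $p\preceq q$ and $q\preceq p$; and $p\succeq0$ if $p(\bar n)\ge0$ for all $\bar n\in\mathbb{N}^\ell$ large enough. (''Large enough'' means all coordinates of $\bar n$ are at least some bound.) *)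

(* Defs.v *)
From HB Require Import structures.
From mathcomp Require Import all_boot all_order all_algebra.
From mathcomp Require Import reals.
From mathcomp Require Import mpoly.
Set Implicit Arguments.
Unset Strict Implicit.
Unset Printing Implicit Defensive.
Import Order.TTheory GRing.Theory Num.Theory.
Local Open Scope ring_scope.

Definition evalN (R : realType) (l : nat) (p : {mpoly R[l]}) (n : 'I_l -> nat) : R :=
  p.@[fun i => (n i)%:R].

Definition eventuallyN (l : nat) (P : ('I_l -> nat) -> Prop) : Prop :=
  exists N : nat, forall n : 'I_l -> nat, (forall i, (N <= n i)%N) -> P n.

Definition poly_preceq (R : realType) (l : nat) (p q : {mpoly R[l]}) : Prop :=
  exists c : 'I_l -> nat,
    eventuallyN (fun n => evalN p n <= evalN q (fun i => (n i + c i)%N)).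

Definition poly_simeq (R : realType) (l : nat) (p q : {mpoly R[l]}) : Prop :=
  poly_preceq p q /\ poly_preceq q p.

Definition poly_nonneg (R : realType) (l : nat) (p : {mpoly R[l]}) : Prop :=
  eventuallyN (fun n => 0 <= evalN p n).

(* Leading homogeneous component: the homogeneous part of p of degree
   d = total degree of p (msize p = 1 + deg p, and 0 for p = 0; so the
   leading component of the zero polynomial is 0). *)
Definition lead_homog (R : realType) (l : nat) (p : {mpoly R[l]}) : {mpoly R[l]} :=
  pihomog mdeg (msize p).-1 p.

(* Main.v *)
Require Import Defs.
From HB Require Import structures.
From mathcomp Require Import all_boot all_order all_algebra.
From mathcomp Require Import reals polyrcf.
From mathcomp Require Import mpoly.
From mathcomp Require Import zify.
Import Order.TTheory GRing.Theory Num.Theory.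
Local Open Scope ring_scope.

Lemma sum_msupp_ind (R : realType) n (P : {mpoly R[n]}) (C : pred 'X_{1..n}) m0 :
  \sum_(m <- msupp P | C m) P@_m * (m == m0)%:R = if C m0 then P@_m0 else 0.
Proof.
rewrite big_mkcond /=.
case: (boolP (m0 \in msupp P)) => Hm0.
  rewrite (bigD1_seq m0) //= ?msupp_uniq // eqxx mulr1 big1 ?addr0.
    by case: (C m0).
  by move=> m /negbTE ->; rewrite mulr0 if_same.
rewrite big1_seq ?(memN_msupp_eq0 Hm0) ?if_same // => m /andP[_ Hm].
case: eqP => [E|]; first by rewrite -E Hm in Hm0.
by rewrite mulr0 if_same.
Qed.

Definition mrest n (m : 'X_{1..n.+1}) : 'X_{1..n} :=
  [multinom m (widen_ord (leqnSn n) i) | i < n].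
Arguments mrest {n}.

Lemma mnm_splitE n (m m0 : 'X_{1..n.+1}) :
  (m == m0) = (m ord_max == m0 ord_max) && (mrest m == mrest m0).
Proof.
apply/eqP/andP => [->//|[/eqP Hl /eqP Hr]].
apply/mnmP => i; case: (unliftP ord_max i) => [j ->|->] //.
have := congr1 (fun mm : 'X_{1..n} => mm j) Hr; rewrite /mrest !mnmE.
have -> : lift ord_max j = widen_ord (leqnSn n) j.
  by apply/val_inj; rewrite /= /bump leqNgt ltn_ord.
done.
Qed.

Lemma meval_split (R : realType) n (P : {mpoly R[n.+1]}) (v : 'I_n.+1 -> R) :
  P.@[v] = \sum_(m <- msupp P) P@_m *
    (('X_[mrest m]).@[fun j => v (widen_ord (leqnSn n) j)] * v ord_max ^+ m ord_max).
Proof.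
rewrite mevalE; apply eq_bigr => m _; rewrite mevalX big_ord_recr /=.
congr (_ * (_ * _)); apply eq_bigr => i _; by rewrite /mrest mnmE.
Qed.

Lemma mpoly_vanish (R : realType) n (P : {mpoly R[n]}) :
  (forall x : 'I_n -> nat, (forall i, (0 < x i)%N) -> P.@[fun i => (x i)%:R] = 0) ->
  P = 0.
Proof.
elim: n P => [|n IH] P HP.
  have hm : forall m : 'X_{1..0}, m = 0%MM by move=> m; apply/mnmP => -[].
  have hs : (msize P <= 1)%N.
    rewrite msizeE; elim: (msupp P) => [|a s ih]; rewrite ?big_nil ?big_cons //.
    by rewrite geq_max ih andbT (hm a) mdeg0.
  rewrite (msize1_polyC hs).
  move: (HP (fun _ => 1%N) (fun _ => isT)).
  rewrite {1}(msize1_polyC hs) mevalC => ->; by rewrite mpolyC0.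
apply/mpolyP => m0; rewrite mcoeff0.
pose U k := \sum_(m <- msupp P | m ord_max == k) P@_m *: 'X_[mrest m].
have HU : forall k, U k = 0.
  move=> k; apply: IH => x' Hx'.
  pose v' := fun j => (x' j)%:R : R.
  pose Q : {poly R} :=
    \sum_(m <- msupp P) (P@_m * ('X_[mrest m]).@[v']) *: 'X^(m ord_max).
  have HQ : Q = 0.
    apply: (roots_geq_poly_eq0 (rs := [seq (i.+1)%:R | i <- iota 0 (size Q)])).
    + apply/allP => r /mapP [i _ ->]; rewrite /root.
      have := HP (fun j => if unlift ord_max j is Some j' then x' j' else i.+1) _.
      have Hw : forall j, unlift ord_max (widen_ord (leqnSn n) j) = Some j.
        move=> j; have -> : widen_ord (leqnSn n) j = lift ord_max j.
          by apply/val_inj; rewrite /= /bump leqNgt ltn_ord.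
        by rewrite liftK.
      rewrite meval_split => <- //.
        rewrite horner_sum; apply/eqP; apply eq_bigr => m _.
        rewrite hornerZ hornerXn -mulrA unlift_none; congr (_ * (_ * _)).
        by apply: meval_eq => j /=; rewrite Hw.
      by move=> j; case: unlift.
    + rewrite map_inj_uniq ?iota_uniq //.
      by move=> a b /eqP; rewrite eqr_nat => /eqP [].
    + by rewrite size_map size_iota.
  have := congr1 (fun q : {poly R} => q`_k) HQ; rewrite /= coef0 coef_sum => HQk.
  rewrite /U (big_morph _ (mevalD _) (meval0 _)) big_mkcond /=; apply: (eq_trans _ HQk).
  apply eq_bigr => m _.
  rewrite coefZ coefXn eq_sym; case: eqP => _.
    by rewrite mevalZ mulr1.
  by rewrite mulr0.
have := congr1 (mcoeff (mrest m0)) (HU (m0 ord_max)).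
rewrite mcoeff0 /U (big_morph _ (@mcoeffD _ _ _) (@mcoeff0 _ _ _)) => <-.
transitivity (\sum_(m <- msupp P | m ord_max == m0 ord_max) P@_m * (m == m0)%:R).
  by rewrite sum_msupp_ind eqxx.
apply eq_bigr => m /eqP Hm.
by rewrite mcoeffZ mcoeffX mnm_splitE Hm eqxx.
Qed.

Lemma poly_ev_nonneg (R : realType) (A : {poly R}) N :
  (forall s : nat, (N <= s)%N -> 0 <= A.[s%:R]) -> 0 <= lead_coef A.
Proof.
move=> HA; rewrite leNgt; apply/negP => Hlt.
have HlA : 0 < lead_coef (- A) by rewrite lead_coefN oppr_gt0.
have [y Hy] := @poly_pinfty_gt_lc R (- A) HlA.
pose s := maxn N (Num.Def.archi_bound `|y|).
have Hs : y <= s%:R.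
  apply: (le_trans (ler_norm y)); apply: ltW.
  apply: (lt_le_trans (archi_boundP (normr_ge0 y))).
  by rewrite ler_nat leq_maxr.
have := Hy _ Hs; rewrite lead_coefN hornerN lerN2 => H1.
have := HA s (leq_maxl _ _).
by rewrite leNgt (le_lt_trans H1 Hlt).
Qed.

Lemma lead_coef_top (R : realType) (A : {poly R}) K :
  (size A <= K.+1)%N -> 0 <= lead_coef A -> 0 <= A`_K.
Proof.
move=> Hs Hl; have [->|HK] := eqVneq (A`_K) 0; first by [].
have HsK : size A = K.+1.
  apply/eqP; rewrite eqn_leq Hs /=; apply: contraNT HK; rewrite -leqNgt => H.
  by apply/eqP; apply: nth_default.
by rewrite lead_coefE HsK /= in Hl.
Qed.

Section Uni.
Variables (R : realType) (l : nat).

Definition Tm (x c : 'I_l -> nat) (m : 'X_{1..l}) : {poly R} :=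
  \prod_(i < l) (((x i)%:R)%:P * 'X + ((c i)%:R)%:P) ^+ m i.

Definition Ux (x c : 'I_l -> nat) (p : {mpoly R[l]}) : {poly R} :=
  \sum_(m <- msupp p) p@_m *: Tm x c m.

Lemma Ux_horner x c p (s : R) :
  (Ux x c p).[s] = p.@[fun i => s * (x i)%:R + (c i)%:R].
Proof.
rewrite /Ux mevalE horner_sum; apply eq_bigr => m _.
rewrite hornerZ /Tm horner_prod; congr (_ * _); apply eq_bigr => i _.
by rewrite horner_exp hornerMXaddC hornerC mulrC.
Qed.

Lemma Tm_size x c m : (forall i, (0 < x i)%N) ->
  size (Tm x c m) = (mdeg m).+1 /\ lead_coef (Tm x c m) = \prod_(i < l) (x i)%:R ^+ m i.
Proof.
move=> Hx.
have Hs : forall i, size (((x i)%:R)%:P * 'X + ((c i)%:R)%:P : {poly R}) = 2%N.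
  move=> i; have Hx0 : (x i)%:R != 0 :> R by rewrite pnatr_eq0 -lt0n Hx.
  by rewrite size_MXaddC polyC_eq0 (negbTE Hx0) /= size_polyC Hx0.
have Hn : forall i, ((((x i)%:R)%:P * 'X + ((c i)%:R)%:P : {poly R}) != 0).
  by move=> i; rewrite -size_poly_eq0 Hs.
split.
  rewrite /Tm size_prod; last by move=> i _; rewrite expf_neq0.
  under eq_bigr do rewrite my_size_exp // Hs mul1n.
  rewrite (eq_bigr (fun i => m i + 1)%N); last by move=> i _; rewrite addn1.
  rewrite big_split sum1_card -mdegE.
  rewrite !cardE /=; lia.
rewrite /Tm lead_coef_prod; apply eq_bigr => i _.
rewrite lead_coef_exp; congr (_ ^+ _).
by rewrite lead_coefE Hs /= coefD coefMX coefC /= coefC /= addr0.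
Qed.

Lemma Tm_coef x c m k : (forall i, (0 < x i)%N) -> (mdeg m <= k)%N ->
  (Tm x c m)`_k = if k == mdeg m then \prod_(i < l) (x i)%:R ^+ m i else 0.
Proof.
move=> Hx Hk; have [Hs Hl] := Tm_size x c m Hx.
case: eqP => [->|Hne].
  by rewrite -Hl lead_coefE Hs.
by apply: nth_default; rewrite Hs ltn_neqAle eq_sym; apply/andP; split => //; apply/eqP.
Qed.

Lemma Ux_coef x c p k : (forall i, (0 < x i)%N) -> (msize p <= k.+1)%N ->
  (Ux x c p)`_k = (pihomog mdeg k p).@[fun i => (x i)%:R].
Proof.
move=> Hx Hp.
rewrite /Ux coef_sum pihomogE (big_morph _ (mevalD _) (meval0 _)) [RHS]big_mkcond /=.
apply eq_big_seq => m Hm; rewrite coefZ.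
have Hd : (mdeg m <= k)%N by rewrite -ltnS; exact: leq_trans (msize_mdeg_lt Hm) Hp.
rewrite Tm_coef // eq_sym; case: eqP => _.
  by rewrite mevalZ mevalX.
by rewrite mulr0.
Qed.

Lemma Ux_size x c p K : (forall i, (0 < x i)%N) -> (msize p <= K.+1)%N ->
  (size (Ux x c p) <= K.+1)%N.
Proof.
move=> Hx Hp; apply/leq_sizeP => j Hj.
rewrite /Ux coef_sum big1_seq // => m /andP[_ Hm].
have Hd : (mdeg m < j)%N.
  have := msize_mdeg_lt Hm => H; exact: (leq_trans H (leq_trans Hp Hj)).
by rewrite coefZ Tm_coef ?(ltnW Hd) // gtn_eqF // mulr0.
Qed.

End Uni.
Arguments Ux {R l}.
Arguments Tm {R l}.
Arguments Ux_size {R l x} c {p K}.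
Arguments lead_coef_top {R A K}.

Lemma mcoeff_pihomog (R : realType) l d (p : {mpoly R[l]}) m :
  (pihomog mdeg d p)@_m = if mdeg m == d then p@_m else 0.
Proof.
rewrite pihomogE (big_morph _ (@mcoeffD _ _ _) (@mcoeff0 _ _ _)).
transitivity (\sum_(m' <- msupp p | mdeg m' == d) p@_m' * (m' == m)%:R);
  last by rewrite sum_msupp_ind.
by apply eq_bigr => m' _; rewrite mcoeffZ mcoeffX.
Qed.

Lemma lead_ne (R : realType) l (p q : {mpoly R[l]}) :
  (msize p < msize q)%N ->
  pihomog mdeg (msize q).-1 p != pihomog mdeg (msize q).-1 q.
Proof.
move=> H.
have Hq0 : (0 < msize q)%N by exact: leq_ltn_trans (leq0n _) H.
have q0 : q != 0 by rewrite -msize_poly_eq0 -lt0n.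
have Hd : mdeg (mlead q) = (msize q).-1 by rewrite -(mlead_deg q0).
apply/negP => /eqP /(congr1 (mcoeff (mlead q))); rewrite !mcoeff_pihomog Hd eqxx.
have -> : p@_(mlead q) = 0.
  apply: memN_msupp_eq0; apply: msize_mdeg_ge.
  by rewrite Hd -ltnS prednK.
move/eqP; rewrite eq_sym mleadc_eq0.
by rewrite (negbTE q0).
Qed.

Lemma key (R : realType) l (p q : {mpoly R[l]}) (c : 'I_l -> nat) N K
  (x : 'I_l -> nat) :
  (forall i, (0 < x i)%N) -> (msize p <= K.+1)%N -> (msize q <= K.+1)%N ->
  (forall n : 'I_l -> nat, (forall i, (N <= n i)%N) ->
     evalN p n <= evalN q (fun i => (n i + c i)%N)) ->
  (pihomog mdeg K p).@[fun i => (x i)%:R] <= (pihomog mdeg K q).@[fun i => (x i)%:R].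
Proof.
move=> Hx Hp Hq H.
pose A := Ux x c q - Ux x (fun _ => 0%N) p.
have HA : 0 <= lead_coef A.
  apply: (@poly_ev_nonneg R A N) => s Hs.
  rewrite /A hornerD hornerN !Ux_horner subr_ge0.
  have := H (fun i => (s * x i)%N) (fun i => leq_trans Hs (leq_pmulr _ (Hx i))).
  rewrite /evalN => H'.
  have E1 : p.@[fun i => s%:R * (x i)%:R + (0%N)%:R] = p.@[fun i => ((s * x i)%N)%:R].
    by apply: meval_eq => i; rewrite natrM addr0.
  have E2 : q.@[fun i => s%:R * (x i)%:R + (c i)%:R] = q.@[fun i => ((s * x i + c i)%N)%:R].
    by apply: meval_eq => i; rewrite natrD natrM.
  by rewrite E1 E2.
have Hs : (size A <= K.+1)%N.
  apply/leq_sizeP => j Hj.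
  by rewrite /A coefB (leq_sizeP _ _ (Ux_size c Hx Hq)) // (leq_sizeP _ _ (Ux_size (fun _ => 0%N) Hx Hp)) // subr0.
have := lead_coef_top Hs HA.
by rewrite /A coefB !Ux_coef // subr_ge0.
Qed.

Arguments key {R l p q c N K x}.
Arguments lead_ne {R l p q}.

Theorem proposition4p7 (R : realType) (l : nat) (p q : {mpoly R[l]}) :
  poly_nonneg p -> poly_nonneg q -> poly_simeq p q ->
  lead_homog p = lead_homog q.
Proof.
move=> _ _ [[c1 [N1 H1]] [c2 [N2 H2]]].
pose K := (maxn (msize p) (msize q)).-1.
have HK : (maxn (msize p) (msize q) <= K.+1)%N by rewrite /K leqSpred.
have Hp : (msize p <= K.+1)%N := leq_trans (leq_maxl _ _) HK.
have Hq : (msize q <= K.+1)%N := leq_trans (leq_maxr _ _) HK.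
have E : pihomog mdeg K p = pihomog mdeg K q.
  apply/eqP; rewrite -subr_eq0; apply/eqP; apply: mpoly_vanish => x Hx.
  rewrite mevalB; apply/eqP; rewrite subr_eq0 eq_le.
  by rewrite (key Hx Hp Hq H1) (key Hx Hq Hp H2).
case: (ltngtP (msize p) (msize q)) => Hpq.
- rewrite /K (maxn_idPr (ltnW Hpq)) in E.
  by move: (lead_ne Hpq); rewrite E eqxx.
- rewrite /K (maxn_idPl (ltnW Hpq)) in E.
  by move: (lead_ne Hpq); rewrite E eqxx.
- by rewrite /lead_homog -Hpq; rewrite /K -Hpq maxnn in E.
Qed.
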